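(* Let $P=\mathbb{Q}[x_1,\dots,x_n]$, let $\sigma$ be a term ordering on $\mathbb{T}^n$, let $I$ be an ideal in $P$, and let $G_\sigma$ be its reduced $\sigma$-Gröbner basis. Let $F$ be any finite set of polynomials in $I$, and let $\delta$ be a positive integer such that both $G_\sigma$ and $F$ are contained in $\mathbb{Z}_\delta[x_1,\dots,x_n]$. Let $p$ be a prime number with $p\nmid\delta$. Then: (a) $\operatorname{rad}(\operatorname{den}_\sigma(I))$ divides $\delta$; (b) $\langle \pi_p(F)\rangle \subseteq I_{(p,\sigma)} \subseteq \mathbb{F}_p[x_1,\dots,x_n]$; (c) if there exists a matrix $M$ with entries in $\mathbb{Z}_\delta[x_1,\dots,x_n]$ such that $G_\sigma = F\cdot M$ (viewing $F$ and $G_\sigma$ as row matrices after ordering their elements), then $\langle \pi_p(F)\rangle = I_{(p,\sigma)}$.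
   Context: $\mathbb{T}^n$ is the monoid of power-products in $x_1,\dots,x_n$. For a positive integer $\delta$, $\mathbb{Z}_\delta$ denotes the localization of $\mathbb{Z}$ at the multiplicative system generated by $\delta$. For a prime $p\nmid\delta$, $\pi_p$ denotes the canonical homomorphism $\mathbb{Z}_\delta\to\mathbb{F}_p$ and its coefficientwise extension $\mathbb{Z}_\delta[x_1,\dots,x_n]\to\mathbb{F}_p[x_1,\dots,x_n]$. For a positive integer $N$, $\operatorname{rad}(N)$ is the product of the distinct primes dividing $N$. For $f\in P$, $\operatorname{den}(f)$ is the positive least common multiple of the denominators of the coefficients of $f$ (with $\operatorname{den}(0)=1$); for a set $F$, $\operatorname{den}(F)$ is the lcm of the $\operatorname{den}(f)$, $f\in F$ (with $\operatorname{den}(\emptyset)=1$). The $\sigma$-denominator of $I$ is $\operatorname{den}_\sigma(I)=\operatorname{den}(G_\sigma)$. A prime $p$ is $\sigma$-good for $I$ if $p\nmid \operatorname{den}_\sigma(I)$; for such $p$, $I_{(p,\sigma)}$ denotes the ideal of $\mathbb{F}_p[x_1,\dots,x_n]$ generated by $\pi_p(G_\sigma)$. *)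

(* Defs.v *)
From HB Require Import structures.
From mathcomp Require Import all_boot all_order all_algebra.
From mathcomp Require Import mpoly.
Set Implicit Arguments. Unset Strict Implicit. Unset Printing Implicit Defensive.
Import Order.TTheory GRing.Theory Num.Theory.
Local Open Scope ring_scope.

(* A term ordering on the power products T^n = 'X_{1..n}:
   a total order, compatible with multiplication (= addition of exponent
   vectors), and with 1 (the zero exponent vector) as least element
   (which, for a total multiplicative order, is equivalent to being a
   well-ordering by Dickson's lemma). *)
Definition term_order (n : nat) (le : rel 'X_{1..n}) : Prop :=
  [/\ reflexive le, antisymmetric le, transitive le, total le
    & (forall m1 m2 m : 'X_{1..n}, le m1 m2 -> le (m1 + m)%MM (m2 + m)%MM)] /\
  (forall m : 'X_{1..n}, le 0%MM m).

Definition is_lpp (n : nat) (R : ringType) (le : rel 'X_{1..n})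
    (f : {mpoly R[n]}) (m : 'X_{1..n}) : Prop :=
  m \in msupp f /\ (forall m', m' \in msupp f -> le m' m).

Definition is_ideal (R : comRingType) (I : R -> Prop) : Prop :=
  [/\ I 0, (forall f g, I f -> I g -> I (f + g))
    & (forall a f, I f -> I (a * f))].

Definition is_groebner (n : nat) (le : rel 'X_{1..n})
    (I : {mpoly rat[n]} -> Prop) (G : seq {mpoly rat[n]}) : Prop :=
  (forall g, g \in G -> I g) /\
  (forall f, I f -> f != 0 ->
     exists2 g, g \in G &
       exists mg mf, [/\ is_lpp le g mg, is_lpp le f mf & (mg <= mf)%MM]).

Definition is_reduced_groebner (n : nat) (le : rel 'X_{1..n})
    (I : {mpoly rat[n]} -> Prop) (G : seq {mpoly rat[n]}) : Prop :=
  [/\ is_groebner le I G, uniq G,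
      (forall g, g \in G -> exists mg, is_lpp le g mg /\ g@_mg = 1)
    & (forall g g', g \in G -> g' \in G -> g != g' ->
         forall mg' m, is_lpp le g' mg' -> m \in msupp g -> ~~ (mg' <= m)%MM)].

Definition inZd (delta : nat) (q : rat) : Prop :=
  exists k : nat, (absz (denq q) %| delta ^ k)%N.

Definition poly_inZd (n : nat) (delta : nat) (f : {mpoly rat[n]}) : Prop :=
  forall m : 'X_{1..n}, inZd delta f@_m.

(* pi_p : Z_delta -> F_p (meaningful when p does not divide the
   denominator), and its coefficientwise extension. *)
Definition pi_p (p : nat) (q : rat) : 'F_p :=
  (numq q)%:~R / (denq q)%:~R.

Definition pi_poly (n : nat) (p : nat) (f : {mpoly rat[n]}) : {mpoly 'F_p[n]} :=
  map_mpoly (pi_p p) f.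

Definition den_poly (n : nat) (f : {mpoly rat[n]}) : nat :=
  \big[lcmn/1%N]_(m <- msupp f) absz (denq f@_m).

Definition den_seq (n : nat) (F : seq {mpoly rat[n]}) : nat :=
  \big[lcmn/1%N]_(f <- F) den_poly f.

Definition radn (N : nat) : nat := \prod_(q <- primes N) q.

Definition ideal_gen (R : comRingType) (S : seq R) (f : R) : Prop :=
  exists c : seq R, f = \sum_(i < size S) c`_i * S`_i.

(* Main.v *)
Set Warnings "-all".
Require Import Defs.
From HB Require Import structures.
From mathcomp Require Import all_boot all_order all_algebra.
From mathcomp Require Import mpoly.
From mathcomp Require Import ring.
From Stdlib Require Import Classical ClassicalEpsilon.
Set Implicit Arguments. Unset Strict Implicit.
Import Order.TTheory GRing.Theory Num.Theory.
Local Open Scope ring_scope.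
Definition Zd (d : nat) (q : rat) : Prop :=
  exists (k : nat) (a : int), q = a%:~R / (d ^ k)%:R.

Lemma fracD (F : fieldType) (d k l : nat) (a b : int) : (d%:R : F) != 0 ->
  a%:~R / (d ^ k)%:R + b%:~R / (d ^ l)%:R
  = (a * (d ^ l)%:Z + b * (d ^ k)%:Z)%:~R / (d ^ (k + l))%:R :> F.
Proof.
move=> d0; rewrite rmorphD !rmorphM /= -!pmulrn !natrX exprD.
field; by rewrite !expf_neq0.
Qed.

Lemma fracM (F : fieldType) (d k l : nat) (a b : int) : (d%:R : F) != 0 ->
  (a%:~R / (d ^ k)%:R) * (b%:~R / (d ^ l)%:R)
  = (a * b)%:~R / (d ^ (k + l))%:R :> F.
Proof.
move=> d0; rewrite !rmorphM /= !natrX exprD.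
field; by rewrite !expf_neq0.
Qed.

Lemma fracN (F : fieldType) (d k : nat) (a : int) :
  - (a%:~R / (d ^ k)%:R) = (- a)%:~R / (d ^ k)%:R :> F.
Proof. by rewrite rmorphN mulNr. Qed.

Lemma inZd_Zd d q : (0 < d)%N -> inZd d q -> Zd d q.
Proof.
move=> d0; case=> k /dvdnP [e He]; exists k, (numq q * e%:Z).
have hdk : (0 < d ^ k)%N by rewrite expn_gt0 d0.
have e0 : e != 0%N by apply/eqP=> e0; rewrite He e0 mul0n in hdk.
rewrite He -[q in LHS]divq_num_den rmorphM /= natrM.
have -> : (denq q)%:~R = (`|denq q|%N)%:R :> rat.
  by rewrite pmulrn gez0_abs // ltW // denq_gt0.
have hd : (`|denq q|%N)%:R != 0 :> rat.
  by rewrite pnatr_eq0 absz_eq0 denq_eq0.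
rewrite pmulrn.
field; by rewrite hd pnatr_eq0 e0.
Qed.

Lemma natzR (R : pzRingType) (n : nat) : (n%:Z)%:~R = n%:R :> R.
Proof. by []. Qed.

Lemma Fp_nat_neq0 p (x : nat) : prime p -> ~~ (p %| x)%N -> (x%:R : 'F_p) != 0.
Proof. by move=> pp; rewrite (dvdn_pcharf (pchar_Fp pp)). Qed.

Lemma pi_frac p d k (a : int) : prime p -> ~~ (p %| d)%N -> (0 < d)%N ->
  pi_p p (a%:~R / (d ^ k)%:R) = a%:~R / (d ^ k)%:R.
Proof.
move=> pp pd d0.
set q := a%:~R / (d ^ k)%:R.
have hdk : (0 < d ^ k)%N by rewrite expn_gt0 d0.
have hdkR : (d ^ k)%:R != 0 :> rat by rewrite pnatr_eq0 -lt0n.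
have hD : (`|denq q|%N)%:R != 0 :> rat by rewrite pnatr_eq0 absz_eq0 denq_eq0.
have hDz : denq q = (`|denq q|%N)%:Z by rewrite gez0_abs // ltW // denq_gt0.
have eq : numq q * (d ^ k)%:Z = a * denq q.
  apply: (@intr_inj rat).
  have : (numq q)%:~R / (denq q)%:~R = a%:~R / (d ^ k)%:R :> rat := divq_num_den q.
  rewrite !rmorphM /= hDz !natzR.
  move: hD; set N := (numq q)%:~R; set D := (`|denq q|%N)%:R; set A := a%:~R.
  move: hdkR; set E := (d ^ k)%:R => hE hD h.
  have -> : N = A / E * D by rewrite -h; field.
  field; by [].
have pD : ~~ (p %| `|denq q|)%N.
  apply/negP=> /dvdn_trans h.
  have : (`|denq q| %| d ^ k)%N.
    have : (`|denq q| %| `|numq q| * d ^ k)%N.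
      by rewrite -[(d ^ k)%N]/(`|(d ^ k)%:Z|%N) -abszM eq abszM dvdn_mull.
    by rewrite Gauss_dvdr // coprime_sym coprime_num_den.
  by move/h; rewrite Euclid_dvdX // (negbTE pd).
rewrite /pi_p hDz natzR.
have hDF := @Fp_nat_neq0 p _ pp pD.
have hEF : ((d ^ k)%:R : 'F_p) != 0.
  by apply: Fp_nat_neq0 => //; rewrite Euclid_dvdX // negb_and pd.
have eqF : (numq q)%:~R * ((d ^ k)%:R : 'F_p) = a%:~R * (`|denq q|%N)%:R.
  have := congr1 (fun z : int => (z%:~R : 'F_p)) eq => /=.
  rewrite !rmorphM /= natzR => ->; congr (_ * _); by rewrite -natzR -hDz.
move: hDF hEF eqF; set N := (numq q)%:~R; set D := (`|denq q|%N)%:R.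
set E := (d ^ k)%:R; set A := a%:~R => hD' hE' h.
have -> : N = A * D / E by rewrite -h; field.
field; by rewrite hD' hE'.
Qed.

Lemma Zd0 d : Zd d 0.
Proof. by exists 0%N, 0; rewrite mul0r. Qed.

Lemma Zd1 d : Zd d 1.
Proof. by exists 0%N, 1; rewrite expn0 divr1. Qed.

Lemma ZdD d x y : (0 < d)%N -> Zd d x -> Zd d y -> Zd d (x + y).
Proof.
move=> d0 [k [a ->]] [l [b ->]]; exists (k + l)%N, (a * (d ^ l)%:Z + b * (d ^ k)%:Z).
by rewrite fracD // pnatr_eq0 -lt0n.
Qed.

Lemma ZdM d x y : (0 < d)%N -> Zd d x -> Zd d y -> Zd d (x * y).
Proof.
move=> d0 [k [a ->]] [l [b ->]]; exists (k + l)%N, (a * b).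
by rewrite fracM // pnatr_eq0 -lt0n.
Qed.

Lemma ZdN d x : Zd d x -> Zd d (- x).
Proof. by move=> [k [a ->]]; exists k, (- a); rewrite fracN. Qed.

Lemma pi_p0 p : pi_p p 0 = 0.
Proof. by rewrite /pi_p mul0r. Qed.

Lemma pi_pD p d x y : prime p -> ~~ (p %| d)%N -> (0 < d)%N ->
  Zd d x -> Zd d y -> pi_p p (x + y) = pi_p p x + pi_p p y.
Proof.
move=> pp pd d0 [k [a ->]] [l [b ->]].
rewrite fracD ?pnatr_eq0 -?lt0n // !pi_frac // fracD //.
exact: Fp_nat_neq0.
Qed.

Lemma pi_pM p d x y : prime p -> ~~ (p %| d)%N -> (0 < d)%N ->
  Zd d x -> Zd d y -> pi_p p (x * y) = pi_p p x * pi_p p y.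
Proof.
move=> pp pd d0 [k [a ->]] [l [b ->]].
rewrite fracM ?pnatr_eq0 -?lt0n // !pi_frac // fracM //.
exact: Fp_nat_neq0.
Qed.

Lemma pi_pN p d x : prime p -> ~~ (p %| d)%N -> (0 < d)%N ->
  Zd d x -> pi_p p (- x) = - pi_p p x.
Proof.
move=> pp pd d0 [k [a ->]].
by rewrite fracN !pi_frac // fracN.
Qed.

Lemma pi_p1 p d : prime p -> ~~ (p %| d)%N -> (0 < d)%N -> pi_p p 1 = 1.
Proof.
move=> pp pd d0; have := @pi_frac p d 0 1 pp pd d0.
by rewrite expn0 !divr1.
Qed.

Lemma Zd_sum d (I : Type) (r : seq I) (P : pred I) (F : I -> rat) :
  (0 < d)%N -> (forall i, P i -> Zd d (F i)) -> Zd d (\sum_(i <- r | P i) F i).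
Proof.
move=> d0 h; apply: (big_ind (Zd d)) => //; [exact: Zd0 | move=> x y; exact: ZdD].
Qed.

Lemma pi_p_sum p d (I : Type) (r : seq I) (P : pred I) (F : I -> rat) :
  prime p -> ~~ (p %| d)%N -> (0 < d)%N ->
  (forall i, P i -> Zd d (F i)) ->
  pi_p p (\sum_(i <- r | P i) F i) = \sum_(i <- r | P i) pi_p p (F i).
Proof.
move=> pp pd d0 h.
pose K (x : rat) (y : 'F_p) := Zd d x /\ pi_p p x = y.
suff [] : K (\sum_(i <- r | P i) F i) (\sum_(i <- r | P i) pi_p p (F i)) by [].
apply: (big_ind2 K).
- by split; [exact: Zd0 | exact: pi_p0].
- move=> x1 y1 x2 y2 [h1 <-] [h2 <-]; split; first exact: ZdD.
  exact: (pi_pD pp pd d0 h1 h2).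
- by move=> i Pi; split; [exact: h|].
Qed.
Lemma mcoeff_map_gen (n : nat) (R S : nzRingType) (f : R -> S) (q : {mpoly R[n]}) m :
  f 0 = 0 -> (map_mpoly f q)@_m = f q@_m.
Proof.
move=> f0; rewrite /map_mpoly /mmap raddf_sum /=.
under eq_bigr => m' _ do rewrite mmap1_id mcoeffCM mcoeffX.
case: (boolP (m \in msupp q)) => hm.
  rewrite (bigD1_seq m) //= ?msupp_uniq // eqxx mulr1 big1 ?addr0 //.
  by move=> i /negbTE; rewrite eq_sym => ->; rewrite mulr0.
rewrite memN_msupp_eq0 // f0 big_seq big1 // => i hi.
by rewrite (_ : (i == m) = false) ?mulr0 //; apply/negbTE; apply: contraNneq hm => <-.
Qed.

Definition PZ (n d : nat) (f : {mpoly rat[n]}) := forall m, Zd d f@_m.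

Lemma PZ0 n d : PZ d (0 : {mpoly rat[n]}).
Proof. by move=> m; rewrite mcoeff0; exact: Zd0. Qed.

Lemma PZD n d (f g : {mpoly rat[n]}) : (0 < d)%N -> PZ d f -> PZ d g -> PZ d (f + g).
Proof. by move=> d0 hf hg m; rewrite mcoeffD; apply: ZdD. Qed.

Lemma PZN n d (f : {mpoly rat[n]}) : PZ d f -> PZ d (- f).
Proof. by move=> hf m; rewrite mcoeffN; apply: ZdN. Qed.

Lemma PZM n d (f g : {mpoly rat[n]}) : (0 < d)%N -> PZ d f -> PZ d g -> PZ d (f * g).
Proof.
move=> d0 hf hg m; rewrite mcoeffM; apply: Zd_sum => // k _; exact: ZdM.
Qed.

Lemma PZX n d (m : 'X_{1..n}) : PZ d ('X_[m] : {mpoly rat[n]}).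
Proof. by move=> k; rewrite mcoeffX; case: (_ == _); [exact: Zd1 | exact: Zd0]. Qed.

Lemma PZZ n d c (f : {mpoly rat[n]}) : (0 < d)%N -> Zd d c -> PZ d f -> PZ d (c *: f).
Proof. by move=> d0 hc hf m; rewrite mcoeffZ; apply: ZdM. Qed.

Lemma PZ_sum n d (I : Type) (r : seq I) (P : pred I) (F : I -> {mpoly rat[n]}) :
  (0 < d)%N -> (forall i, P i -> PZ d (F i)) -> PZ d (\sum_(i <- r | P i) F i).
Proof.
move=> d0 h; apply: (big_ind (@PZ n d)) => //; [exact: PZ0 | move=> x y; exact: PZD].
Qed.

Lemma mcoeff_pi n p (f : {mpoly rat[n]}) m : (pi_poly p f)@_m = pi_p p f@_m.
Proof. exact: (mcoeff_map_gen _ _ (pi_p0 p)). Qed.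

Lemma pi_poly0 n p : pi_poly p (0 : {mpoly rat[n]}) = 0.
Proof.
apply/mpolyP => m; rewrite [LHS]mcoeff_pi [RHS]mcoeff0 [in LHS]mcoeff0.
exact: pi_p0.
Qed.

Lemma pi_polyD n p d (f g : {mpoly rat[n]}) : prime p -> ~~ (p %| d)%N -> (0 < d)%N ->
  PZ d f -> PZ d g -> pi_poly p (f + g) = pi_poly p f + pi_poly p g.
Proof.
move=> pp pd d0 hf hg; apply/mpolyP => m.
rewrite [LHS]mcoeff_pi [RHS]mcoeffD.
rewrite [X in _ = X + _]mcoeff_pi [X in _ = _ + X]mcoeff_pi (mcoeffD m f).
exact: (pi_pD pp pd d0).
Qed.

Lemma pi_polyM n p d (f g : {mpoly rat[n]}) : prime p -> ~~ (p %| d)%N -> (0 < d)%N ->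
  PZ d f -> PZ d g -> pi_poly p (f * g) = pi_poly p f * pi_poly p g.
Proof.
move=> pp pd d0 hf hg; apply/mpolyP => m.
rewrite [LHS]mcoeff_pi [RHS]mcoeffM (mcoeffM f g m) (pi_p_sum _ pp pd d0).
  apply: eq_bigr => k _.
  rewrite [X in _ = X * _]mcoeff_pi [X in _ = _ * X]mcoeff_pi.
  exact: (pi_pM pp pd d0).
by move=> k _; apply: ZdM.
Qed.

Lemma pi_poly_sum n p d (I : Type) (r : seq I) (P : pred I) (F : I -> {mpoly rat[n]}) :
  prime p -> ~~ (p %| d)%N -> (0 < d)%N ->
  (forall i, P i -> PZ d (F i)) ->
  pi_poly p (\sum_(i <- r | P i) F i) = \sum_(i <- r | P i) pi_poly p (F i).
Proof.
move=> pp pd d0 h.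
pose K (x : {mpoly rat[n]}) (y : {mpoly 'F_p[n]}) := PZ d x /\ pi_poly p x = y.
suff [] : K (\sum_(i <- r | P i) F i) (\sum_(i <- r | P i) pi_poly p (F i)) by [].
apply: (big_ind2 K).
- by split; [exact: PZ0 | exact: pi_poly0].
- move=> x1 y1 x2 y2 [h1 <-] [h2 <-]; split; first exact: PZD.
  exact: (pi_polyD pp pd d0 h1 h2).
- by move=> i Pi; split; [exact: h|].
Qed.

Lemma inZd_PZ n d (f : {mpoly rat[n]}) : (0 < d)%N -> poly_inZd d f -> PZ d f.
Proof. by move=> d0 h m; apply: inZd_Zd. Qed.
Lemma ideal_gen_of (R : comRingType) (S : seq R) (c : 'I_(size S) -> R) :
  ideal_gen S (\sum_(i < size S) c i * S`_i).
Proof.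
exists [seq c i | i <- enum 'I_(size S)]; apply: eq_bigr => i _.
by rewrite (nth_map i) ?size_enum_ord // nth_ord_enum.
Qed.

Lemma ideal_gen_trans (R : comRingType) (S T : seq R) h :
  (forall j : 'I_(size T), ideal_gen S T`_j) -> ideal_gen T h -> ideal_gen S h.
Proof.
move=> /fin_all_exists [dd hdd] [c ->].
have -> : \sum_(j < size T) c`_j * T`_j =
   \sum_(i < size S) (\sum_(j < size T) c`_j * (dd j)`_i) * S`_i.
  under eq_bigr => j _ do rewrite hdd big_distrr /=.
  rewrite exchange_big /=; apply: eq_bigr => i _.
  by rewrite big_distrl /=; apply: eq_bigr => j _; rewrite mulrA.
exact: ideal_gen_of.
Qed.
Lemma nat_min (P : nat -> Prop) : (exists k, P k) ->
  exists k, P k /\ forall j, P j -> (k <= j)%N.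
Proof.
move=> [k Pk]; apply: NNPP => H.
suff : forall k j, (j <= k)%N -> ~ P j by move/(_ k k (leqnn k)).
elim=> [|k' IH] j hj.
  rewrite leqn0 in hj; move/eqP: hj => -> P0; apply: H; exists 0%N; split => // j _.
move=> Pj; case: (leqP j k') => hjk; first exact: (IH j).
apply: H; exists j; split => // i Pi; rewrite leqNgt; apply/negP => hij.
apply: (IH i) => //; have : (i < k'.+1)%N by apply: leq_trans hij hj.
by [].
Qed.

Lemma incr_lt (phi : nat -> nat) : (forall a, phi a < phi a.+1)%N ->
  forall a b, (a < b)%N -> (phi a < phi b)%N.
Proof.
move=> h a; elim=> [//|b IH]; rewrite ltnS leq_eqVlt => /orP [/eqP ->|hab] //.
exact: ltn_trans (IH hab) (h b).
Qed.

Lemma mono_le (u : nat -> nat) : (forall a, u a <= u a.+1)%N ->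
  forall a b, (a <= b)%N -> (u a <= u b)%N.
Proof.
move=> h a; elim=> [|b IH]; first by rewrite leqn0 => /eqP ->.
rewrite leq_eqVlt => /orP [/eqP ->|hab] //.
exact: leq_trans (IH hab) (h b).
Qed.

Lemma nat_subseq (u : nat -> nat) : exists phi : nat -> nat,
  (forall a, phi a < phi a.+1)%N /\ (forall a, u (phi a) <= u (phi a.+1))%N.
Proof.
have hm : forall i, exists j, (i <= j)%N /\ forall j', (i <= j')%N -> (u j <= u j')%N.
  move=> i.
  have [v [[j [hij <-]] hv]] := @nat_min (fun v => exists j, (i <= j)%N /\ u j = v)
     (ex_intro _ (u i) (ex_intro _ i (conj (leqnn i) erefl))).
  by exists j; split => // j' hj'; apply: hv; exists j'.
pose mi i := proj1_sig (constructive_indefinite_description _ (hm i)).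
have hmi i : (i <= mi i)%N /\ forall j', (i <= j')%N -> (u (mi i) <= u j')%N.
  exact: (proj2_sig (constructive_indefinite_description _ (hm i))).
pose phi := fix phi a := match a with 0 => mi 0%N | a'.+1 => mi (phi a').+1 end.
have h1 : forall a, (phi a < phi a.+1)%N by move=> a; exact: (proj1 (hmi _)).
exists phi; split => // a.
case: a => [|a].
  by apply: (proj2 (hmi 0%N)).
rewrite [phi a.+1]/=; apply: (proj2 (hmi _)).
by apply: ltn_trans (h1 a) (h1 a.+1).
Qed.

Lemma dickson n (s : nat -> 'X_{1..n}) : exists i j, (i < j)%N /\ (s i <= s j)%MM.
Proof.
have claim : forall k, (k <= n)%N -> exists phi : nat -> nat,
    (forall a, phi a < phi a.+1)%N /\
    forall a b, (a <= b)%N -> forall i : 'I_n, (i < k)%N -> (s (phi a) i <= s (phi b) i)%N.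
  elim=> [|k IH] hk.
    by exists id; split => // a b _ i.
  have [phi [phi1 phi2]] := IH (ltnW hk).
  pose i0 := Ordinal hk.
  have [psi [psi1 psi2]] := nat_subseq (fun a => s (phi a) i0).
  exists (fun a => phi (psi a)); split.
    by move=> a; apply: incr_lt => //.
  move=> a b hab i; rewrite ltnS leq_eqVlt => /orP [/eqP hi|hi].
    have -> : i = i0 by apply: val_inj.
    exact: (mono_le (u := fun a => s (phi (psi a)) i0)).
  apply: phi2 => //.
  move: hab; rewrite leq_eqVlt => /orP [/eqP ->|hab] //.
  by apply: ltnW; apply: incr_lt.
have [phi [phi1 phi2]] := claim n (leqnn n).
exists (phi 0%N), (phi 1%N); split => //.
by apply/mnm_lepP => i; apply: phi2.
Qed.

Definition ltT n (le : rel 'X_{1..n}) (x y : 'X_{1..n}) := le x y && (x != y).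

Lemma ltT_trans n (le : rel 'X_{1..n}) : term_order le ->
  forall x y z, ltT le x y -> ltT le y z -> ltT le x z.
Proof.
move=> [[refl anti trans tot compat] ge0] x y z /andP [lxy nxy] /andP [lyz nyz].
apply/andP; split; first exact: trans lxy lyz.
apply/negP => /eqP exz; subst z.
by move: nyz; rewrite (anti y x) ?eqxx ?lyz ?lxy.
Qed.

Lemma divle n (le : rel 'X_{1..n}) : term_order le ->
  forall m1 m2, (m1 <= m2)%MM -> le m1 m2.
Proof.
move=> [[refl anti trans tot compat] ge0] m1 m2 h.
have := compat _ _ m1 (ge0 (m2 - m1)%MM).
by rewrite add0m submK.
Qed.

Lemma wf_term n (le : rel 'X_{1..n}) : term_order le ->
  well_founded (fun x y => ltT le x y).
Proof.
move=> hto; have hto' := hto.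
move: hto' => [[refl anti trans tot compat] ge0].
pose R := fun x y => ltT le x y.
move=> x; apply: NNPP => nx.
have step : forall y, ~ Acc R y -> exists z, R z y /\ ~ Acc R z.
  move=> y ny; apply: NNPP => H; apply: ny; constructor => z Rz.
  by apply: NNPP => nz; apply: H; exists z.
pose T := {y | ~ Acc R y}.
have step' : forall t : T, exists t' : T, R (proj1_sig t') (proj1_sig t).
  move=> [y ny]; have [z [Rz nz]] := step y ny.
  by exists (exist _ z nz).
pose f t := proj1_sig (constructive_indefinite_description _ (step' t)).
have hf t : R (proj1_sig (f t)) (proj1_sig t).
  exact: (proj2_sig (constructive_indefinite_description _ (step' t))).
pose s a := proj1_sig (iter a f (exist _ x nx)).
have hs : forall a b, (a < b)%N -> R (s b) (s a).
  move=> a; elim=> [//|b IH]; rewrite ltnS leq_eqVlt => /orP [/eqP ->|hab].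
    by rewrite /s iterS; apply: hf.
  apply: ltT_trans hto _ _ _ _ (IH hab).
  by rewrite /s iterS; apply: hf.
have [i [j [hij hle]]] := dickson s.
have := hs _ _ hij; rewrite /R /ltT => /andP [lji nji].
have lij := divle hto hle.
by move: nji; rewrite (anti (s j) (s i)) ?eqxx ?lji ?lij.
Qed.
Definition gen n d (G : seq {mpoly rat[n]}) (f : {mpoly rat[n]}) :=
  exists c : seq {mpoly rat[n]}, (forall i, PZ d c`_i) /\
    f = \sum_(i < size G) c`_i * G`_i.

Lemma gen0 n d (G : seq {mpoly rat[n]}) : gen d G 0.
Proof.
exists [::]; split; first by move=> i; rewrite nth_nil; exact: PZ0.
by rewrite big1 // => i _; rewrite nth_nil mul0r.
Qed.

Lemma gen_add n d (G : seq {mpoly rat[n]}) f b j : (0 < d)%N ->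
  gen d G f -> (j < size G)%N -> PZ d b -> gen d G (f + b * G`_j).
Proof.
move=> d0 [c [hc ->]] hj hb.
exists (mkseq (fun i => c`_i + (i == j)%:R * b) (size G)); split.
  move=> i; case: (ltnP i (size G)) => hi.
    rewrite nth_mkseq //; apply: PZD => //; case: (i == j).
      by rewrite mul1r.
    by rewrite mul0r; exact: PZ0.
  by rewrite nth_default ?size_mkseq //; exact: PZ0.
under [RHS]eq_bigr => i _ do rewrite nth_mkseq // mulrDl.
rewrite big_split /=; congr (_ + _).
rewrite (bigD1 (Ordinal hj)) //= eqxx mul1r big1 ?addr0 // => i hi.
suff -> : (i == j :> nat) = false by rewrite mul0r mul0r.
by apply/negbTE; apply: contraNneq hi => h; apply/eqP/val_inj.
Qed.

Lemma max_exists n (le : rel 'X_{1..n}) (s : seq 'X_{1..n}) :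
  reflexive le -> transitive le -> total le -> s != [::] ->
  exists2 m, m \in s & forall m', m' \in s -> le m' m.
Proof.
move=> refl trans tot; elim: s => [//|x s IH] _.
case: (eqVneq s [::]) => [->|ns].
  exists x; first by rewrite mem_seq1.
  by move=> m'; rewrite mem_seq1 => /eqP ->.
have [m0 hm0 hmax] := IH ns.
case/orP: (tot x m0) => h.
  exists m0; first by rewrite in_cons hm0 orbT.
  by move=> m'; rewrite in_cons => /orP [/eqP ->|]; [|apply: hmax].
exists x; first by rewrite in_cons eqxx.
move=> m'; rewrite in_cons => /orP [/eqP ->|hm']; first exact: refl.
exact: trans (hmax _ hm') h.
Qed.

Lemma lpp_exists n (le : rel 'X_{1..n}) (f : {mpoly rat[n]}) :
  term_order le -> f != 0 -> exists m, is_lpp le f m.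
Proof.
move=> [[refl anti trans tot compat] ge0] nf.
have ns : msupp f != [::].
  apply/eqP => hs; move/eqP: nf; apply; apply/mpolyP => m.
  by rewrite mcoeff0 memN_msupp_eq0 // hs.
by have [m hm hmax] := max_exists refl trans tot ns; exists m.
Qed.

Lemma lpp_uniq n (le : rel 'X_{1..n}) R (f : {mpoly R[n]}) m1 m2 :
  term_order le -> is_lpp le f m1 -> is_lpp le f m2 -> m1 = m2.
Proof.
move=> [[refl anti trans tot compat] ge0] [h1 h1'] [h2 h2'].
by apply: anti; rewrite h2' ?h1'.
Qed.

Lemma reduce n (le : rel 'X_{1..n}) (I : {mpoly rat[n]} -> Prop) G d f mf :
  term_order le -> is_ideal I -> is_reduced_groebner le I G -> (0 < d)%N ->
  (forall g, g \in G -> PZ d g) ->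
  I f -> PZ d f -> f != 0 -> is_lpp le f mf ->
  exists j b, [/\ (j < size G)%N, PZ d b, I (f - b * G`_j), PZ d (f - b * G`_j)
    & forall m', m' \in msupp (f - b * G`_j) -> ltT le m' mf].
Proof.
move=> hto [I0 ID IM] [[GI Ggb] _ Gmon _] d0 GZ If fZ nf hlf.
have hto' := hto; move: hto' => [[refl anti trans tot compat] ge0].
have [g gG [mg [mf' [hlg hlf' hdiv]]]] := Ggb f If nf.
have emf := lpp_uniq hto hlf' hlf; subst mf'.
have [mg2 [hlg2 g1]] := Gmon g gG.
have emg := lpp_uniq hto hlg2 hlg; subst mg2.
set t := (mf - mg)%MM.
set b := f@_mf *: 'X_[t].
exists (index g G), b; rewrite nth_index //.
have hb : PZ d b := PZZ d0 (fZ mf) (PZX d t).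
split.
- by rewrite index_mem.
- exact: hb.
- rewrite -mulNr; apply: ID => //; apply: IM; exact: GI.
- exact: (PZD d0 fZ (PZN (PZM d0 hb (GZ g gG)))).
move=> m' hm'.
have htm : (t + mg)%MM = mf by rewrite /t submK.
have hbg : b * g = f@_mf *: (g * 'X_[t]) by rewrite /b -scalerAl mulrC.
have le_all : forall m'', m'' \in msupp (f - b * g) -> le m'' mf.
  move=> m'' /msuppB_le; rewrite mem_cat => /orP [h|h]; first exact: (proj2 hlf) _ h.
  rewrite hbg in h; move/msuppZ_le: h.
  rewrite (perm_mem (msuppMX g t)) => /mapP [u hu ->].
  have := compat _ _ t ((proj2 hlg) u hu).
  by rewrite [(u + t)%MM]addmC [(mg + t)%MM]addmC htm.
have c1 : (g * 'X_[t])@_mf = 1 by rewrite -htm mcoeffMX.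
have c0 : (f - b * g)@_mf = 0.
  by rewrite mcoeffB hbg mcoeffZ c1 mulr1 subrr.
apply/andP; split; first exact: le_all.
apply/eqP => e; move: hm'; rewrite e mcoeff_msupp c0.
by rewrite eqxx.
Qed.

Lemma division n (le : rel 'X_{1..n}) (I : {mpoly rat[n]} -> Prop) G d :
  term_order le -> is_ideal I -> is_reduced_groebner le I G -> (0 < d)%N ->
  (forall g, g \in G -> PZ d g) ->
  forall m f, I f -> PZ d f -> (forall m', m' \in msupp f -> le m' m) -> gen d G f.
Proof.
move=> hto hI hG d0 GZ m.
have hto' := hto; move: hto' => [[refl anti trans tot compat] ge0].
elim/(well_founded_induction (wf_term hto)): m => m IH f If fZ hs.
case: (eqVneq f 0) => [->|nf]; first exact: gen0.
have [mf hlf] := lpp_exists hto nf.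
have [j [b [hj hb If' fZ' hlt]]] := reduce hto hI hG d0 GZ If fZ nf hlf.
have -> : f = (f - b * G`_j) + b * G`_j by rewrite subrK.
apply: gen_add => //.
case: (eqVneq (f - b * G`_j) 0) => [->|nf']; first exact: gen0.
have [m2 hl2] := lpp_exists hto nf'.
apply: (IH m2) => //; last exact: (proj2 hl2).
have /andP [l2 n2] := hlt _ (proj1 hl2).
have lfm := hs _ (proj1 hlf).
apply/andP; split; first exact: trans l2 lfm.
apply/eqP => e; subst m2.
by move: n2; rewrite (anti m mf) ?eqxx ?l2 ?lfm.
Qed.

Lemma gen_all n (le : rel 'X_{1..n}) (I : {mpoly rat[n]} -> Prop) G d f :
  term_order le -> is_ideal I -> is_reduced_groebner le I G -> (0 < d)%N ->
  (forall g, g \in G -> PZ d g) -> I f -> PZ d f -> gen d G f.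
Proof.
move=> hto hI hG d0 GZ If fZ.
case: (eqVneq f 0) => [->|nf]; first exact: gen0.
have [mf hlf] := lpp_exists hto nf.
exact: (division hto hI hG d0 GZ If fZ (proj2 hlf)).
Qed.
Lemma prime_lcm r a b : prime r -> (r %| lcmn a b)%N -> (r %| a)%N || (r %| b)%N.
Proof.
move=> pr h; rewrite -Euclid_dvdM //; apply: dvdn_trans h _.
by rewrite dvdn_lcm dvdn_mulr ?dvdn_mull.
Qed.

Lemma prime_dvd_den n d (G : seq {mpoly rat[n]}) r :
  (forall g, g \in G -> poly_inZd d g) -> prime r -> (r %| den_seq G)%N -> (r %| d)%N.
Proof.
move=> GZ pr; elim: G GZ => [|g G IH] GZ.
  by rewrite /den_seq big_nil Euclid_dvd1.
rewrite /den_seq big_cons => /(prime_lcm pr) /orP [h|h]; last first.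
  by apply: IH => // g' hg'; apply: GZ; rewrite in_cons hg' orbT.
have gZ : poly_inZd d g by apply: GZ; rewrite in_cons eqxx.
move: h; rewrite /den_poly; elim: (msupp g) => [|m s IHs].
  by rewrite big_nil Euclid_dvd1.
rewrite big_cons => /(prime_lcm pr) /orP [h|h]; last exact: IHs.
have [k hk] := gZ m.
have : (r %| d ^ k)%N by apply: dvdn_trans h hk.
by rewrite Euclid_dvdX // => /andP [].
Qed.

Lemma prod_primes_dvd (s : seq nat) d : uniq s ->
  (forall q, q \in s -> prime q /\ (q %| d)%N) -> (\prod_(q <- s) q %| d)%N.
Proof.
elim: s => [|q s IH] /=; first by rewrite big_nil dvd1n.
move=> /andP [qs us] h; rewrite big_cons.
have [pq qd] := h q (mem_head q s).
rewrite Gauss_dvd ?qd ?IH //.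
  by move=> q' hq'; apply: h; rewrite in_cons hq' orbT.
rewrite prime_coprime // Euclid_dvd_prod // big_has.
apply/hasP => -[x xs]; have [px _] : prime x /\ (x %| d)%N by apply: h; rewrite in_cons xs orbT.
rewrite dvdn_prime2 // => /eqP e; subst x.
by move: qs; rewrite xs.
Qed.

Lemma radn_dvd N d : (forall r, prime r -> (r %| N)%N -> (r %| d)%N) -> (radn N %| d)%N.
Proof.
move=> h; apply: prod_primes_dvd; first exact: primes_uniq.
move=> q; rewrite mem_primes => /and3P [pq _ qN]; split => //; exact: h.
Qed.

Lemma ideal_gen_map (A B : comRingType) (S : seq A) (pi : A -> B) (c : 'I_(size S) -> B) :
  ideal_gen (map pi S) (\sum_(i < size S) c i * pi S`_i).
Proof.
exists [seq c i | i <- enum 'I_(size S)].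
rewrite size_map; apply: eq_bigr => i _.
rewrite (nth_map i) ?size_enum_ord // nth_ord_enum.
by rewrite (nth_map 0).
Qed.

Lemma nth_map_pi n p (s : seq {mpoly rat[n]}) i :
  (map (@pi_poly n p) s)`_i = pi_poly p s`_i.
Proof.
case: (ltnP i (size s)) => h; first by rewrite (nth_map 0).
by rewrite !nth_default ?size_map // pi_poly0.
Qed.

Lemma gen_pi n p d (G : seq {mpoly rat[n]}) f :
  prime p -> ~~ (p %| d)%N -> (0 < d)%N -> (forall g, g \in G -> PZ d g) ->
  gen d G f -> ideal_gen (map (@pi_poly n p) G) (pi_poly p f).
Proof.
move=> pp pd d0 GZ [c [hc ->]].
rewrite (pi_poly_sum _ pp pd d0 (fun (i : 'I_(size G)) _ => PZM d0 (hc i) (GZ _ (mem_nth 0 (ltn_ord i))))).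
under eq_bigr => i _ do rewrite (pi_polyM pp pd d0 (hc i) (GZ _ (mem_nth 0 (ltn_ord i)))).
exact: ideal_gen_map.
Qed.

Unset Implicit Arguments.
Theorem theorem2p8 (n : nat) (le : rel 'X_{1..n})
    (I : {mpoly rat[n]} -> Prop) (G F : seq {mpoly rat[n]})
    (delta p : nat) :
  term_order le ->
  is_ideal I ->
  is_reduced_groebner le I G ->
  (forall f, f \in F -> I f) ->
  (0 < delta)%N ->
  (forall g, g \in G -> poly_inZd delta g) ->
  (forall f, f \in F -> poly_inZd delta f) ->
  prime p -> ~~ (p %| delta)%N ->
  [/\ (radn (den_seq G) %| delta)%N,
      (forall h, ideal_gen (map (@pi_poly n p) F) h ->
                 ideal_gen (map (@pi_poly n p) G) h)
    & ((exists M : 'M[{mpoly rat[n]}]_(size F, size G),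
          (forall i j, poly_inZd delta (M i j)) /\
          (forall j : 'I_(size G), G`_j = \sum_(i < size F) F`_i * M i j)) ->
       forall h, ideal_gen (map (@pi_poly n p) F) h <->
                 ideal_gen (map (@pi_poly n p) G) h)].
Proof.
move=> hto hI hG FI d0 GZd FZd pp pd.
have GZ : forall g, g \in G -> PZ delta g by move=> g hg; apply: (inZd_PZ d0 (GZd g hg)).
have FZ : forall f, f \in F -> PZ delta f by move=> f hf; apply: (inZd_PZ d0 (FZd f hf)).
have incl : forall h, ideal_gen (map (@pi_poly n p) F) h -> ideal_gen (map (@pi_poly n p) G) h.
  move=> h; apply: ideal_gen_trans => j.
  have hj : (j < size F)%N by rewrite -(size_map (@pi_poly n p)) ltn_ord.
  rewrite nth_map_pi; apply: (gen_pi pp pd d0 GZ).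
  apply: (gen_all hto hI hG d0 GZ); [apply: FI | apply: FZ]; exact: mem_nth.
split.
- by apply: radn_dvd => r pr hr; exact: (prime_dvd_den GZd pr hr).
- exact: incl.
move=> [M [MZd hM]] h; split; first exact: incl.
have MZ : forall i j, PZ delta (M i j) by move=> i j; apply: (inZd_PZ d0 (MZd i j)).
apply: ideal_gen_trans => j.
have hj : (j < size G)%N by rewrite -(size_map (@pi_poly n p)) ltn_ord.
rewrite nth_map_pi (hM (Ordinal hj)).
rewrite (pi_poly_sum _ pp pd d0 (fun (i : 'I_(size F)) _ => PZM d0 (FZ _ (mem_nth 0 (ltn_ord i))) (MZ i (Ordinal hj)))).
under eq_bigr => i _ do rewrite (pi_polyM pp pd d0 (FZ _ (mem_nth 0 (ltn_ord i))) (MZ i (Ordinal hj))) mulrC.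
exact: ideal_gen_map.
Qed.
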